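(* Let $d\ge 3$ be an integer and let $\ell \ge 5$ be a prime. Let $(x,y)$ be an integer solution of \[ d(2x+d+1)\left(x^2+(d+1)x+\frac{d(d+1)}{2}\right)=2y^\ell . \] Then there are rational numbers $y_1,y_2$ and a pair $(\alpha,\beta)\in\mathcal{A}_d$ such that \[ 2x+d+1=\alpha y_1^\ell, \qquad x^2+(d+1)x+\frac{d(d+1)}{2}=\beta y_2^\ell . \] Moreover, if $3\le d\le 50$ then $y_1$ and $y_2$ are integers.
   Context: For a prime $q$ let $\mu_q=\operatorname{ord}_q(d^2-1)$ and $\nu_q=\operatorname{ord}_q(d)$. To each prime $q$ associate a finite set $T_q\subset\mathbb{Z}^2$: if $q\nmid d(d^2-1)$, $T_q=\{(0,0)\}$. For $q=2$: $T_2=\{(0,1-\nu_2)\}$ if $2\mid d$; $T_2=\{(1,0),(\mu_2/2,1-\mu_2/2),(3-\mu_2,\mu_2-2)\}$ if $2\nmid d$ and $\mu_2$ is even; $T_2=\{(1,0),(3-\mu_2,\mu_2-2)\}$ if $2\nmid d$ and $\mu_2$ is odd. For odd $q\mid d$: $T_q=\{(-\nu_q,0),(0,-\nu_q)\}$. For odd $q\mid d^2-1$: $T_q=\{(0,0),(-\mu_q,\mu_q),(\mu_q/2,-\mu_q/2)\}$ if $\mu_q$ is even, and $T_q=\{(0,0),(-\mu_q,\mu_q)\}$ if $\mu_q$ is odd. Then $\mathcal{A}_d$ is the (finite) set of pairs of positive rationals $(\alpha,\beta)$ with $(\operatorname{ord}_q(\alpha),\operatorname{ord}_q(\beta))\in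 T_q$ for every prime $q$. *)

(* Defs.v *)
From HB Require Import structures.
From mathcomp Require Import all_boot all_order all_algebra.
Set Implicit Arguments. Unset Strict Implicit. Unset Printing Implicit Defensive.
Import Order.TTheory GRing.Theory Num.Theory.
Local Open Scope ring_scope.

Definition ordq (q : nat) (r : rat) : int :=
  (logn q `|numq r|%N)%:Z - (logn q `|denq r|%N)%:Z.

Definition mu (d q : nat) : nat := logn q (d ^ 2 - 1)%N.
Definition nu (d q : nat) : nat := logn q d.

Definition inT (d q : nat) (a b : int) : Prop :=
  let m := (mu d q)%:Z in
  let h := ((mu d q)./2)%:Z in
  let n := (nu d q)%:Z in
  if ~~ (q %| d * (d ^ 2 - 1))%N then (a, b) = (0, 0)
  else if q == 2%N then
    if (2 %| d)%N then (a, b) = (0, 1 - n)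
    else if ~~ odd (mu d q) then
      (a, b) = (1, 0) \/ (a, b) = (h, 1 - h) \/ (a, b) = (3 - m, m - 2)
    else (a, b) = (1, 0) \/ (a, b) = (3 - m, m - 2)
  else if (q %| d)%N then (a, b) = (- n, 0) \/ (a, b) = (0, - n)
  else
    if ~~ odd (mu d q) then
      (a, b) = (0, 0) \/ (a, b) = (- m, m) \/ (a, b) = (h, - h)
    else (a, b) = (0, 0) \/ (a, b) = (- m, m).

Definition in_A (d : nat) (alpha beta : rat) : Prop :=
  0 < alpha /\ 0 < beta /\
  forall q : nat, prime q -> inT d q (ordq q alpha) (ordq q beta).

(* Main.v *)
Require Import Defs.
From HB Require Import structures.
From mathcomp Require Import all_boot all_order all_algebra.
From mathcomp Require Import zify ring lra.
From Stdlib Require Import IndefiniteDescription.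
Import Order.TTheory GRing.Theory Num.Theory.

Lemma ldiv q m : prime q -> 0 < m -> (q %| m) = (0 < logn q m).
Proof. by move=> pq m0; rewrite -{1}[q]expn1 pfactor_dvdn. Qed.

Lemma logn_add_lt q a b : prime q -> 0 < a -> 0 < b ->
  logn q a < logn q b -> logn q (a + b) = logn q a.
Proof.
move=> pq a0 b0 lt; set k := logn q a.
have h1 : q ^ k %| a by rewrite pfactor_dvdn.
have h2 : q ^ k.+1 %| b by rewrite pfactor_dvdn.
have h3 : q ^ k %| b by apply: dvdn_trans h2; rewrite dvdn_exp2l.
have ab : 0 < a + b by rewrite addn_gt0 a0.
apply/eqP; rewrite eqn_leq -pfactor_dvdn // dvdn_add // andbT.
rewrite leqNgt -pfactor_dvdn //; apply/negP => h.
have : q ^ k.+1 %| a by rewrite -(dvdn_addl _ h2).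
by rewrite pfactor_dvdn // /k ltnn.
Qed.

Lemma logn_prime_ne q p : prime p -> q != p -> logn q p = 0.
Proof. by move=> pp qp; rewrite logn_prime // (negPf qp). Qed.

Lemma two_dvd d : 2 %| d * (d ^ 2 - 1).
Proof.
case: (d =P 0) => [->|/eqP d0] //.
rewrite Euclid_dvdM // !dvdn2; case: (boolP (odd d)) => od //=.
by rewrite oddB ?oddX ?od // expn_gt0 lt0n d0.
Qed.


Lemma local d l q uu vv yy : 3 <= d -> prime l -> 5 <= l -> prime q ->
  0 < uu -> 0 < vv -> 0 < yy ->
  d * uu * vv = 2 * yy ^ l -> 4 * vv = uu ^ 2 + (d ^ 2 - 1) ->
  exists a b ka kb : int, inT d q a b /\
    (Posz (logn q uu)) = (a + (Posz l) * ka)%R /\ (Posz (logn q vv)) = (b + (Posz l) * kb)%R.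
Proof.
move=> d3 pl l5 pq u0 v0 y0 E1 E2.
set U := logn q uu; set V := logn q vv; set D := logn q d; set Y := logn q yy.
set m := logn q (d ^ 2 - 1).
have d0 : 0 < d by lia.
have w0 : 0 < d ^ 2 - 1 by nia.
have uu2 : 0 < uu ^ 2 by rewrite expn_gt0 u0.
have hE : D + U + V = logn q 2 + l * Y.
  have := congr1 (logn q) E1.
  by rewrite !lognM ?muln_gt0 ?d0 ?u0 ?expn_gt0 ?y0 // lognX.
have hW : logn q 4 + V = logn q (uu ^ 2 + (d ^ 2 - 1)).
  by rewrite -E2 lognM.
have hU2 : logn q (uu ^ 2) = 2 * U by rewrite lognX.
have hsub : d ^ 2 - 1 = 4 * vv - uu ^ 2 by lia.
have hdiv : q %| uu -> q %| vv -> q %| d ^ 2 - 1.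
  by move=> hu hv; rewrite hsub dvdn_sub ?dvdn_mull // dvdn_exp.
have hUd : (q %| uu) = (0 < U) by rewrite ldiv.
have hVd : (q %| vv) = (0 < V) by rewrite ldiv.
have hDd : (q %| d) = (0 < D) by rewrite ldiv.
have hmd : (q %| d ^ 2 - 1) = (0 < m) by rewrite ldiv.
rewrite /inT /mu /nu -/m -/D.
have [hq|hq] := boolP (q %| d * (d ^ 2 - 1)); rewrite ?hq /=; last first.
  have hq0 := hq; move: hq; rewrite Euclid_dvdM // negb_or hDd hmd => /andP[hD hm].
  have q2 : q != 2 by apply: contraNneq hq0 => ->; rewrite two_dvd.
  have : logn q 2 = 0 by rewrite logn_prime_ne.
  have : ~~ (0 < U) || ~~ (0 < V).
    by rewrite -negb_and; apply/negP => /andP[]; rewrite -hUd -hVd => a b; move: hm; rewrite -hmd hdiv.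
  case/orP => h h2.
    by exists 0, 0, 0, (Posz Y); split => //; (clear E1 E2 hsub hdiv hW hU2 hUd hVd hDd hmd; lia).
  by exists 0, 0, (Posz Y), 0; split => //; (clear E1 E2 hsub hdiv hW hU2 hUd hVd hDd hmd; lia).
case: (eqVneq q 2) => [q2|q2].
  rewrite /=.
  have l22 : logn 2 2 = 1 by rewrite logn_prime.
  have l24 : logn 2 4 = 2 by rewrite -[4]/(2 ^ 2) lognX l22.
  move: hE hW hU2 hUd hVd hDd hmd; rewrite /U /V /D /Y /m q2 => hE hW hU2 hUd hVd hDd hmd.
  have [h2d|h2d] := boolP (2 %| d); rewrite ?h2d /=.
    have hU0 : logn 2 uu = 0.
      apply/eqP; rewrite -leqn0 leqNgt -hUd; apply/negP => hu.
      have h1 : 2 %| d ^ 2 - 1 by rewrite hsub; apply: dvdn_sub; [exact: dvdn_mulr | exact: dvdn_exp hu].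
      have h3 : 2 %| d ^ 2 by rewrite dvdn_exp.
      have : 2 %| d ^ 2 - (d ^ 2 - 1) by rewrite dvdn_sub.
      have -> : d ^ 2 - (d ^ 2 - 1) = 1 by (clear E1 E2 hsub hdiv hW hU2 hUd hVd hDd hmd; lia).
      by [].
    by exists 0, (1 - (Posz (logn 2 d)))%R, 0, (Posz (logn 2 yy)); split => //; (clear E1 E2 hsub hdiv hW hU2 hUd hVd hDd hmd; lia).
  have hD0 : logn 2 d = 0 by apply/eqP; rewrite -leqn0 leqNgt -hDd.
  case: (ltngtP (2 * logn 2 uu) (logn 2 (d ^ 2 - 1))) => cmp.
  - have hV : 2 + logn 2 vv = 2 * logn 2 uu.
      by rewrite -l24 hW -hU2 logn_add_lt // hU2.
    have : l %| 3 * (logn 2 uu - 1) by apply/dvdnP; exists (logn 2 yy); (clear E1 E2 hsub hdiv hW hU2 hUd hVd hDd hmd; lia).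
    rewrite Gauss_dvdr; last by rewrite prime_coprime // dvdn_prime2 //; (clear E1 E2 hsub hdiv hW hU2 hUd hVd hDd hmd; lia).
    case/dvdnP => k hk.
    exists 1, 0, (Posz k), (Posz (2 * k)); split; first by case: ifP => _; left.
    (clear E1 E2 hsub hdiv hW hU2 hUd hVd hDd hmd; lia).
  - have hV : 2 + logn 2 vv = logn 2 (d ^ 2 - 1).
      by rewrite -l24 hW addnC logn_add_lt // hU2.
    exists (3 - (Posz (logn 2 (d ^ 2 - 1))))%R, ((Posz (logn 2 (d ^ 2 - 1))) - 2)%R, (Posz (logn 2 yy)), 0.
    split; first by case: ifP => _; right => //; right.
    (clear E1 E2 hsub hdiv hW hU2 hUd hVd hDd hmd; lia).
  - have ho : odd (logn 2 (d ^ 2 - 1)) = false by rewrite -cmp oddM.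
    have hh : (logn 2 (d ^ 2 - 1))./2 = logn 2 uu by rewrite -cmp mul2n doubleK.
    rewrite ho hh /=.
    exists (Posz (logn 2 uu)), (1 - (Posz (logn 2 uu)))%R, 0, (Posz (logn 2 yy)).
    split; first by right; left.
    (clear E1 E2 hsub hdiv hW hU2 hUd hVd hDd hmd; lia).
rewrite /=.
have l2 : logn q 2 = 0 by rewrite logn_prime_ne.
have [hqd|hqd] := boolP (q %| d); rewrite ?hqd /=.
  have hm : ~~ (q %| d ^ 2 - 1).
    apply/negP => h1.
    have h3 : q %| d ^ 2 by rewrite dvdn_exp.
    have : q %| d ^ 2 - (d ^ 2 - 1) by rewrite dvdn_sub.
    have -> : d ^ 2 - (d ^ 2 - 1) = 1 by (clear E1 E2 hsub hdiv hW hU2 hUd hVd hDd hmd; lia).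
    by rewrite dvdn1; apply/negP; move: (prime_gt1 pq); (clear E1 E2 hsub hdiv hW hU2 hUd hVd hDd hmd; lia).
  have : ~~ (0 < U) || ~~ (0 < V).
    by rewrite -negb_and; apply/negP => /andP[]; rewrite -hUd -hVd => a b; move: hm; rewrite hdiv.
  case/orP => h.
    by exists 0, (- (Posz D))%R, 0, (Posz Y); split; [right | clear E1 E2 hsub hdiv hW hU2 hUd hVd hDd hmd; lia].
  by exists (- (Posz D))%R, 0, (Posz Y), 0; split; [left | clear E1 E2 hsub hdiv hW hU2 hUd hVd hDd hmd; lia].
have hD0 : D = 0 by apply/eqP; rewrite -leqn0 leqNgt -hDd.
have l4 : logn q 4 = 0 by rewrite -[4]/(2 ^ 2) lognX l2.
case: (ltngtP (2 * U) m) => cmp.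
- have hV : V = 2 * U by move: hW; rewrite l4 add0n logn_add_lt ?hU2.
  have : l %| 3 * U by apply/dvdnP; exists Y; (clear E1 E2 hsub hdiv hW hU2 hUd hVd hDd hmd; lia).
  rewrite Gauss_dvdr; last by rewrite prime_coprime // dvdn_prime2 //; (clear E1 E2 hsub hdiv hW hU2 hUd hVd hDd hmd; lia).
  case/dvdnP => k hk.
  exists 0, 0, (Posz k), (Posz (2 * k)); split; first by case: ifP => _; left.
  (clear E1 E2 hsub hdiv hW hU2 hUd hVd hDd hmd; lia).
- have hV : V = m by move: hW; rewrite l4 add0n addnC logn_add_lt ?hU2.
  exists (- (Posz m))%R, (Posz m), (Posz Y), 0.
  split; first by case: ifP => _; right => //; left.
  (clear E1 E2 hsub hdiv hW hU2 hUd hVd hDd hmd; lia).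
- have ho : odd m = false by rewrite -cmp oddM.
  have hh : m./2 = U by rewrite -cmp mul2n doubleK.
  rewrite ho hh /=.
  exists (Posz U), (- (Posz U))%R, 0, (Posz Y).
  split; first by right; right.
  (clear E1 E2 hsub hdiv hW hU2 hUd hVd hDd hmd; lia).
Qed.

Lemma local0 d q vv : 3 <= d -> prime q -> 0 < vv -> 4 * vv = d ^ 2 - 1 ->
  exists a : int, inT d q a (Posz (logn q vv)).
Proof.
move=> d3 pq v0 E.
set V := logn q vv; set D := logn q d; set m := logn q (d ^ 2 - 1).
have d0 : 0 < d by lia.
have w0 : 0 < d ^ 2 - 1 by nia.
have hW : logn q 4 + V = m by rewrite /m -E lognM.
have hVd : (q %| vv) = (0 < V) by rewrite ldiv.
have hDd : (q %| d) = (0 < D) by rewrite ldiv.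
have hmd : (q %| d ^ 2 - 1) = (0 < m) by rewrite ldiv.
have vd : vv %| d ^ 2 - 1 by rewrite -E dvdn_mull.
have nd : q %| d -> ~~ (q %| d ^ 2 - 1).
  move=> h; apply/negP => h1.
  have h3 : q %| d ^ 2 by rewrite dvdn_exp.
  have : q %| d ^ 2 - (d ^ 2 - 1) by rewrite dvdn_sub.
  have -> : d ^ 2 - (d ^ 2 - 1) = 1 by rewrite subKn // expn_gt0 d0.
  by rewrite dvdn1 => /eqP q1; move: pq; rewrite q1.
rewrite /inT /mu /nu -/m -/D.
have [hq|hq] := boolP (q %| d * (d ^ 2 - 1)); rewrite ?hq /=; last first.
  have hV : V = 0.
    apply/eqP; rewrite -leqn0 leqNgt -hVd; apply/negP => h.
    by move: hq; rewrite Euclid_dvdM // (dvdn_trans h vd) orbT.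
  by exists 0; rewrite hV.
case: (eqVneq q 2) => [q2|q2] /=.
  have l24 : logn 2 4 = 2 by rewrite -[4]/(2 ^ 2) lognX logn_prime.
  move: hW nd hmd; rewrite /V /m q2 l24 => hW nd hmd.
  have h2d : ~~ (2 %| d).
    apply/negP => h; move: (nd h); rewrite -E dvdn_mulr //.
  rewrite (negPf h2d) /=.
  exists (3 - Posz (logn 2 (d ^ 2 - 1)))%R.
  have -> : Posz (logn 2 vv) = (Posz (logn 2 (d ^ 2 - 1)) - 2)%R by move: hW; clear; lia.
  by case: ifP => _; right => //; right.
have l2 : logn q 2 = 0 by rewrite logn_prime_ne.
have l4 : logn q 4 = 0 by rewrite -[4]/(2 ^ 2) lognX l2.
have [hqd|hqd] := boolP (q %| d); rewrite ?hqd /=.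
  have hV : V = 0.
    apply/eqP; rewrite -leqn0 leqNgt -hVd; apply/negP => h.
    by move: (nd hqd); rewrite (dvdn_trans h vd).
  by exists (- Posz D)%R; left; rewrite hV.
exists (- Posz m)%R.
have -> : V = m by move: hW; rewrite l4.
by case: ifP => _; right => //; left.
Qed.

Lemma tab2 : all (fun d => logn 2 (d ^ 2 - 1) <= 6) (iota 3 48).
Proof. by []. Qed.
Lemma tab3 : all (fun d => logn 3 (d ^ 2 - 1) <= 4) (iota 3 48).
Proof. by []. Qed.

Lemma mu_bound d q : 3 <= d <= 50 -> prime q ->
  logn q (d ^ 2 - 1) <= (if q == 2 then 6 else 4).
Proof.
move=> /andP[d3 d50] pq.
have hd : d \in iota 3 48 by rewrite mem_iota; lia.
case: (eqVneq q 2) => [->|q2]; first exact: (allP tab2 d hd).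
case: (eqVneq q 3) => [->|q3]; first exact: (allP tab3 d hd).
have q5 : 5 <= q.
  have := prime_gt1 pq; case: q q2 q3 pq => [|[|[|[|[|q]]]]] //.
have w0 : 0 < d ^ 2 - 1 by nia.
rewrite leqNgt; apply/negP => h.
have h1 : q ^ logn q (d ^ 2 - 1) <= d ^ 2 - 1 by apply: dvdn_leq => //; exact: pfactor_dvdnn.
have h2 : q ^ 5 <= q ^ logn q (d ^ 2 - 1) by rewrite leq_exp2l // prime_gt1.
have h3 : 5 ^ 5 <= q ^ 5 by rewrite leq_exp2r.
have h4 : d ^ 2 <= 50 ^ 2 by rewrite leq_exp2r.
move: h4; rewrite [50 ^ 2]/= => h4.
move: h3; rewrite [5 ^ 5]/= => h3.
lia.
Qed.

Lemma inT_bound d q a b : 3 <= d <= 50 -> prime q -> inT d q a b ->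
  (a < 5)%R /\ (b < 5)%R.
Proof.
move=> hd pq; have := @mu_bound d q hd pq.
rewrite /inT /mu /nu.
set m := logn q (d ^ 2 - 1); set n := logn q d.
have hh : m./2 <= m by rewrite -{2}(odd_double_half m); lia.
case: (eqVneq q 2) => [q2|q2] /= hm;
repeat (case: ifP => _);
repeat (case; [case => -> -> | ]); try (case => -> ->); lia.
Qed.

Local Open Scope ring_scope.

Lemma ordq_frac q (n m : int) : n != 0 -> m != 0 ->
  ordq q (n%:~R / m%:~R) = (logn q `|n|%N)%:Z - (logn q `|m|%N)%:Z.
Proof.
move=> n0 m0; set r := (n%:~R / m%:~R : rat).
have hr : (numq r * m)%:~R = (n * denq r)%:~R :> rat.
  rewrite !intrM numqE /r; field; rewrite intr_eq0 //.
have {hr} /eqP := intr_inj hr.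
have rn : r != 0 by rewrite /r mulf_neq0 ?invr_eq0 ?intr_eq0.
move/eqP => /(congr1 absz); rewrite !abszM => /(congr1 (logn q)).
have nn : (0 < `|numq r|)%N by rewrite absz_gt0 numq_eq0.
have dn : (0 < `|denq r|)%N by rewrite absz_gt0 denq_neq0.
have n1 : (0 < `|n|)%N by rewrite absz_gt0.
have m1 : (0 < `|m|)%N by rewrite absz_gt0.
rewrite !lognM // /ordq => h; lia.
Qed.

Lemma ordq_int q (n : int) : ordq q n%:~R = (logn q `|n|%N)%:Z.
Proof. by rewrite /ordq numq_int denq_int logn1 subr0. Qed.

Lemma ordq_mul q (r s : rat) : r != 0 -> s != 0 ->
  ordq q (r * s) = ordq q r + ordq q s.
Proof.
move=> r0 s0.
have -> : r * s = (numq r * numq s)%:~R / (denq r * denq s)%:~R.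
  by rewrite !intrM -{1}[r]divq_num_den -{1}[s]divq_num_den; field; rewrite !intr_eq0 !denq_neq0.
have nr : numq r != 0 by rewrite numq_eq0.
have ns : numq s != 0 by rewrite numq_eq0.
rewrite ordq_frac ?mulf_neq0 ?denq_neq0 // !abszM !lognM ?absz_gt0 ?denq_neq0 //.
rewrite /ordq; lia.
Qed.

Lemma ordq1 q : ordq q 1 = 0.
Proof. by rewrite /ordq /= logn1. Qed.

Lemma ordqV q (r : rat) : r != 0 -> ordq q r^-1 = - ordq q r.
Proof.
move=> r0; have := @ordq_mul q r r^-1 r0 (invr_neq0 r0).
rewrite mulfV // ordq1 => h; lia.
Qed.

Lemma ordqXn q (r : rat) n : r != 0 -> ordq q (r ^+ n) = (n%:Z * ordq q r).
Proof.
move=> r0; elim: n => [|n IH]; first by rewrite expr0 ordq1 mul0r.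
rewrite exprS ordq_mul ?expf_neq0 // IH; lia.
Qed.

Lemma ordqX q (r : rat) (k : int) : r != 0 -> ordq q (r ^ k) = (k * ordq q r).
Proof.
move=> r0; case: k => n; first by rewrite ordqXn.
have -> : r ^ (Negz n) = (r ^+ n.+1)^-1 by []. 
rewrite ordqV ?expf_neq0 // ordqXn // NegzE; lia.
Qed.

Lemma ordq_div q (r s : rat) : r != 0 -> s != 0 ->
  ordq q (r / s) = ordq q r - ordq q s.
Proof. by move=> r0 s0; rewrite ordq_mul ?invr_neq0 // ordqV. Qed.

Lemma ordq_prime q p : prime p -> ordq q (p%:R) = (q == p)%:Z.
Proof. by move=> pp; rewrite -[p%:R]/((p%:Z)%:~R) ordq_int /= logn_prime. Qed.

Definition P (f : nat -> int) (s : seq nat) : rat :=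
  \prod_(q <- s) (q%:R : rat) ^ (f q).

Lemma P_gt0 f s : all prime s -> 0 < P f s.
Proof.
rewrite /P; elim: s => [|q s IH] /=; first by rewrite big_nil.
case/andP=> pq ps; rewrite big_cons mulr_gt0 ?IH //.
by apply: exprz_gt0; rewrite ltr0n prime_gt0.
Qed.

Lemma ordq_P f s p : prime p -> all prime s -> uniq s ->
  ordq p (P f s) = if p \in s then f p else 0.
Proof.
move=> pp; elim: s => [|q s IH] /=; first by rewrite /P big_nil ordq1.
case/andP=> pq ps /andP[qs us].
have q0 : (q%:R : rat) != 0 by rewrite pnatr_eq0 -lt0n prime_gt0.
rewrite /P big_cons ordq_mul ?expfz_neq0 //; last by rewrite gt_eqF // P_gt0.
rewrite -/(P f s) IH // ordqX // ordq_prime // in_cons.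
case: (eqVneq p q) => [->|pq'] /=; first by rewrite (negPf qs); lia.
lia.
Qed.

Lemma P_int f s : (forall q, q \in s -> 0 <= f q) -> exists z : int, P f s = z%:~R.
Proof.
rewrite /P; elim: s => [|q s IH] H /=; first by exists 1; rewrite big_nil.
have [z hz] : exists z : int, P f s = z%:~R.
  by apply: IH => r rs; apply: H; rewrite in_cons rs orbT.
have := H q (mem_head _ _); case E: (f q) => [n|n] // _.
exists ((q%:Z) ^+ n * z); rewrite big_cons -/(P f s) hz E intrM rmorphXn /=.
by [].
Qed.

Lemma ordq_nat q n : ordq q (n%:R) = (logn q n)%:Z.
Proof. exact: (ordq_int q (Posz n)). Qed.

Theorem lemma4p1 (d l : nat) (x y : int) :
  (3 <= d)%N -> prime l -> (5 <= l)%N ->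
  (d%:R : rat) * (2 * x%:~R + d%:R + 1) *
    (x%:~R ^+ 2 + (d%:R + 1) * x%:~R + d%:R * (d%:R + 1) / 2)
    = 2 * (y%:~R) ^+ l ->
  exists (y1 y2 alpha beta : rat),
    [/\ in_A d alpha beta,
        2 * x%:~R + d%:R + 1 = alpha * y1 ^+ l,
        x%:~R ^+ 2 + (d%:R + 1) * x%:~R + d%:R * (d%:R + 1) / 2 = beta * y2 ^+ l
      & ((d <= 50)%N -> exists z1 z2 : int, y1 = z1%:~R /\ y2 = z2%:~R)].
Proof.
move=> d3 pl l5 H.
set u : int := 2 * x + d%:Z + 1.
set hh : nat := (d * d.+1)./2.
have hh2 : (hh.*2 = d * d.+1)%N.
  by rewrite -[RHS](odd_double_half (d * d.+1)) oddM oddS andbN add0n.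
set vz : int := x ^+ 2 + (d%:Z + 1) * x + hh%:Z.
have R1 : (2 * x%:~R + d%:R + 1 : rat) = u%:~R.
  by rewrite /u !intrD intrM.
have R2 : (x%:~R ^+ 2 + (d%:R + 1) * x%:~R + d%:R * (d%:R + 1) / 2 : rat) = vz%:~R.
  have : (hh%:R : rat) = d%:R * (d%:R + 1) / 2.
    have e : (hh%:R * 2 : rat) = d%:R * (d%:R + 1).
      have := congr1 (fun n => n%:R : rat) hh2; rewrite /= -muln2 !natrM => ->.
      by rewrite mulrSr.
    by rewrite -e mulfK.
  rewrite /vz !intrD !intrM => <-; ring.
rewrite R1 R2 in H *.
have Eq : d%:Z * u * vz = 2 * y ^+ l.
  apply: (@intr_inj rat); by rewrite !intrM rmorphXn.
have W : 4 * vz = u ^+ 2 + d%:Z ^+ 2 - 1.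
  have h : (hh%:Z * 2 = d%:Z * (d%:Z + 1)).
    clear -hh2; move: hh2; rewrite -/hh; lia.
  rewrite /vz /u.
  rewrite (_ : 4 * (x ^+ 2 + (d%:Z + 1) * x + hh%:Z) = 4 * (x ^+ 2 + (d%:Z + 1) * x) + 2 * (hh%:Z * 2)); last by ring.
  rewrite h; ring.
have v0 : 0 < vz.
  have u2 := sqr_ge0 u.
  have d9 : 9 <= d%:Z ^+ 2 by rewrite expr2; clear -d3; nia.
  move: W u2 d9; clear; lia.
set vv := `|vz|%N.
have hvz : vz = Posz vv by rewrite /vv abszE gtr0_norm.
have vpos : (0 < vv)%N by rewrite /vv absz_gt0 gt_eqF.
have lpos : (0 < l)%N by apply: prime_gt0.
have lodd : odd l by case: (even_prime pl) => // l2; move: l5; rewrite l2.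
case: (eqVneq u 0) => [u0|un0].
  have E0 : (4 * vv = d ^ 2 - 1)%N.
    rewrite -!mulnn; move: W; rewrite hvz u0 expr2 mul0r add0r expr2.
    clear; nia.
  have ex0 : forall q, exists a : int, prime q -> inT d q a (Posz (logn q vv)).
    move=> q; case: (boolP (prime q)) => pq; last by exists 0.
    by have [a ha] := local0 d q vv d3 pq vpos E0; exists a.
  pose af q := proj1_sig (constructive_indefinite_description _ (ex0 q)).
  have haf : forall q, prime q -> inT d q (af q) (Posz (logn q vv)).
    by move=> q pq; exact: (proj2_sig (constructive_indefinite_description _ (ex0 q)) pq).
  set s := primes (d * (d ^ 2 - 1)).
  have npos : (0 < d * (d ^ 2 - 1))%N by rewrite muln_gt0; apply/andP; split; [move: d3; clear; lia|move: d3; clear; nia].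
  have af0 : forall q, prime q -> q \notin s -> af q = 0.
    move=> q pq; rewrite mem_primes pq npos /= => hq.
    by have := haf q pq; rewrite /inT hq /=; case.
  exists 0, 1, (P af s), (vz%:~R); split.
  - split; first exact: P_gt0 (all_prime_primes _).
    split; first by rewrite ltr0z.
    move=> q pq; rewrite ordq_P ?all_prime_primes ?primes_uniq // ordq_int -/vv.
    case: ifP => qs; first exact: haf.
    by rewrite -(af0 q pq (negbT qs)); exact: haf.
  - by rewrite u0 expr0n (gtn_eqF lpos) mulr0.
  - by rewrite expr1n mulr1.
  - by move=> _; exists 0, 1.
set uu := `|u|%N.
have upos : (0 < uu)%N by rewrite /uu absz_gt0.
have yn0 : y != 0.
  have dz : d%:Z != 0 by move: d3; clear; lia.
  have : d%:Z * u * vz != 0 by rewrite !mulf_neq0 // gt_eqF.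
  apply: contraNneq => y0; by rewrite Eq y0 expr0n (gtn_eqF lpos) mulr0.
set yy := `|y|%N.
have ypos : (0 < yy)%N by rewrite /yy absz_gt0.
have E1 : (d * uu * vv = 2 * yy ^ l)%N.
  by have := congr1 absz Eq; rewrite !abszM abszX.
have E2 : (4 * vv = uu ^ 2 + (d ^ 2 - 1))%N.
  have hu2 : Posz (uu * uu) = u * u by rewrite -abszM abszE ger0_norm // -expr2 sqr_ge0.
  rewrite -!mulnn; move: W; rewrite hvz !expr2 -hu2 => W.
  clear -W d3; nia.
have ex : forall q, exists t : (int * int * int * int)%type, prime q ->
    inT d q t.1.1.1 t.1.1.2 /\ Posz (logn q uu) = t.1.1.1 + Posz l * t.1.2 /\
    Posz (logn q vv) = t.1.1.2 + Posz l * t.2.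
  move=> q; case: (boolP (prime q)) => pq; last by exists (0, 0, 0, 0).
  have [a [b [ka [kb h]]]] := local d l q uu vv yy d3 pl l5 pq upos vpos ypos E1 E2.
  by exists (a, b, ka, kb).
pose T q := proj1_sig (constructive_indefinite_description _ (ex q)).
have hT : forall q, prime q -> inT d q (T q).1.1.1 (T q).1.1.2 /\
    Posz (logn q uu) = (T q).1.1.1 + Posz l * (T q).1.2 /\
    Posz (logn q vv) = (T q).1.1.2 + Posz l * (T q).2.
  by move=> q pq; exact: (proj2_sig (constructive_indefinite_description _ (ex q)) pq).
pose ka q := (T q).1.2.
pose kb q := (T q).2.
set s := primes (uu * vv * (d * (d ^ 2 - 1))).
have npos : (0 < d * (d ^ 2 - 1))%N by rewrite muln_gt0; apply/andP; split; [move: d3; clear; lia|move: d3; clear; nia].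
have zero : forall q, prime q -> q \notin s -> ka q = 0 /\ kb q = 0.
  have Mpos : (0 < uu * vv * (d * (d ^ 2 - 1)))%N by rewrite muln_gt0 (muln_gt0 uu) upos vpos npos.
  move=> q pq; rewrite mem_primes pq Mpos /= Euclid_dvdM // Euclid_dvdM //.
  rewrite !negb_or => /andP[/andP[hu hv] hq].
  have [hi [e1 e2]] := hT q pq.
  move: hi; rewrite /inT hq /= => -[ha hb].
  move: e1 e2; rewrite ha hb (logn_coprime (_ : coprime q uu)) ?prime_coprime //.
  rewrite (logn_coprime (_ : coprime q vv)) ?prime_coprime // /ka /kb.
  move: lpos; clear; nia.
have ordPa : forall q, prime q -> ordq q (P ka s) = ka q.
  move=> q pq; rewrite ordq_P ?all_prime_primes ?primes_uniq //.
  by case: ifP => // /negbT qs; rewrite (zero q pq qs).1.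
have ordPb : forall q, prime q -> ordq q (P kb s) = kb q.
  move=> q pq; rewrite ordq_P ?all_prime_primes ?primes_uniq //.
  by case: ifP => // /negbT qs; rewrite (zero q pq qs).2.
have Pa0 : 0 < P ka s by apply: P_gt0; exact: all_prime_primes.
have Pb0 : 0 < P kb s by apply: P_gt0; exact: all_prime_primes.
pose sg : rat := if u < 0 then -1 else 1.
have hsg : sg ^+ l = sg.
  by rewrite /sg; case: ifP => _; [rewrite -signr_odd lodd expr1 | rewrite expr1n].
have hu : u%:~R = sg * uu%:R :> rat.
  rewrite /sg; case: ifP => hneg.
    have -> : u = - Posz uu by move: hneg; rewrite /uu; clear; lia.
    by rewrite rmorphN /= mulN1r.
  have -> : u = Posz uu by move: hneg; rewrite /uu; clear; lia.
  by rewrite mul1r.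
exists (sg * P ka s), (P kb s), (uu%:R / (P ka s) ^+ l), (vv%:R / (P kb s) ^+ l).
split.
- split; first by rewrite divr_gt0 ?ltr0n ?exprn_gt0.
  split; first by rewrite divr_gt0 ?ltr0n ?exprn_gt0.
  move=> q pq.
  rewrite !ordq_div ?pnatr_eq0 -?lt0n ?expf_neq0 ?gt_eqF // !ordqXn ?gt_eqF //.
  rewrite !ordq_nat ordPa // ordPb //.
  have [hi [e1 e2]] := hT q pq.
  by rewrite e1 e2 /ka /kb !addrK.
- rewrite hu exprMn hsg; field; by rewrite expf_neq0 // gt_eqF.
- have -> : (vz%:~R : rat) = vv%:R by rewrite hvz.
  field; by rewrite expf_neq0 // gt_eqF.
- move=> d50.
  have hd : (3 <= d <= 50)%N by rewrite d3 d50.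
  have kpos : forall q, prime q -> 0 <= ka q /\ 0 <= kb q.
    move=> q pq; have [hi [e1 e2]] := hT q pq.
    have [ha hb] := @inT_bound d q _ _ hd pq hi.
    rewrite /ka /kb; move: e1 e2 ha hb l5; clear; nia.
  have [za hza] : exists z : int, P ka s = z%:~R.
    apply: P_int => q qs; apply: (kpos q _).1.
    by move: qs; rewrite mem_primes => /andP[].
  have [zb hzb] : exists z : int, P kb s = z%:~R.
    apply: P_int => q qs; apply: (kpos q _).2.
    by move: qs; rewrite mem_primes => /andP[].
  exists ((if u < 0 then -1 else 1) * za), zb; split => //.
  by rewrite hza intrM /sg; case: ifP.
Qed.
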